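(* Let $p\ge q$ and $n\ge 1$ be positive integers and let $B$ be a $p\times q$ matrix. Let $C$ be the $(nq+p)\times(nq+p)$ block matrix $$C=\begin{bmatrix} 0 & B & B & \cdots & B\\ B^T & 0 & I & \cdots & I\\ B^T & I & 0 & \cdots & I\\ \vdots & \vdots & \vdots & \ddots & \vdots\\ B^T & I & I & \cdots & 0\end{bmatrix}$$ (one block of size $p$ followed by $n$ blocks of size $q$; the $q$-blocks are $0$ on the block diagonal and $I_q$ off it), and let $D$ be the $(np+q)\times(np+q)$ block matrix $$D=\begin{bmatrix} 0 & B^T & B^T & \cdots & B^T\\ B & 0 & I & \cdots & I\\ B & I & 0 & \cdots & I\\ \vdots & \vdots & \vdots & \ddots & \vdots\\ B & I & I & \cdots & 0\end{bmatrix}$$ (one block of size $q$ followed by $n$ blocks of size $p$; the $p$-blocks are $0$ on the block diagonal and $I_p$ off it). Then $C$ has $-1$ as an eigenvalue with multiplicity at least $(n-1)q$, and $D$ has $-1$ as an eigenvalue with multiplicity at least $(n-1)p$.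
   Context: $I$ denotes an identity matrix and $0$ a zero matrix of appropriate size. *)

(* Defs.v *)
From HB Require Import structures.
From mathcomp Require Import all_boot all_order all_algebra.
Set Implicit Arguments. Unset Strict Implicit. Unset Printing Implicit Defensive.
Import Order.TTheory GRing.Theory Num.Theory.
Local Open Scope ring_scope.

Definition star_mx (R : nzRingType) (a b n : nat) (M : 'M[R]_(a, b))
  : 'M[R]_(a + \sum_(j < n) b) :=
  block_mx (0 : 'M[R]_(a, a)) (\mxrow_(j < n) M)
           (\mxcol_(i < n) M^T)
           (\mxblock_(i < n, j < n) (if i == j then (0 : 'M[R]_b) else 1%:M)).

Definition matC (R : nzRingType) (p q n : nat) (B : 'M[R]_(p, q)) := star_mx n B.
Definition matD (R : nzRingType) (p q n : nat) (B : 'M[R]_(p, q)) := star_mx n B^T.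

Definition eig_mult (R : fieldType) (m : nat) (A : 'M[R]_m) (x : R) : nat :=
  mup x (char_poly A).

(* Main.v *)
Require Import Defs.
From HB Require Import structures.
From mathcomp Require Import all_boot all_order all_algebra.
Set Implicit Arguments. Unset Strict Implicit. Unset Printing Implicit Defensive.
Import Order.TTheory GRing.Theory Num.Theory.
Local Open Scope ring_scope.
From mathcomp Require Import zify.

Lemma char_poly_conj (F : fieldType) m (A P : 'M[F]_m) :
  P \in unitmx -> char_poly (P *m A *m invmx P) = char_poly A.
Proof.
move=> Pu; rewrite /char_poly /char_poly_mx.
set P' := map_mx polyC P; set Q' := map_mx polyC (invmx P).
have PQ : P' *m Q' = 1%:M by rewrite -map_mxM mulmxV // map_scalar_mx /= polyC1.
have -> : 'X%:M - map_mx polyC (P *m A *m invmx P)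
    = P' *m ('X%:M - map_mx polyC A) *m Q'.
  rewrite !map_mxM mulmxBr mulmxBl -/P' -/Q'; congr (_ - _).
  by rewrite mul_mx_scalar -scalemxAl PQ scalemx1.
by rewrite !det_mulmx mulrAC -det_mulmx PQ det1 mul1r.
Qed.

Lemma rank_mup (F : fieldType) m (A : 'M[F]_m) x :
  (m - \rank (A - x%:M)%R <= mup x (char_poly A))%N.
Proof.
set N := (A - x%:M)%R; set r := \rank N.
have Uu := row_ebase_unit N.
have eN := mulmx_ebase N.
set U := row_ebase N in Uu eN *; set L := col_ebase N in eN *.
pose K : 'M[F]_m := U *m L *m pid_mx r.
have eA : U *m A *m invmx U = K + x%:M.
  have -> : A = N + x%:M by rewrite /N subrK.
  rewrite mulmxDr mulmxDl -{1}eN !mulmxA mulmxK // scalar_mxC mulmxK //.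
rewrite -(char_poly_conj A Uu) eA.
rewrite (mup_geq _ _ (monic_neq0 (char_poly_monic _))).
have K0 : forall i (j : 'I_m), (r <= j)%N -> K i j = 0.
  move=> i j rj; rewrite /K mxE big1 // => k _; rewrite [pid_mx _ _ _]mxE.
  have [ekj|] := eqVneq (k : nat) j; last by rewrite andFb mulr0.
  by rewrite ekj ltnNge rj mulr0.
set d := \row_(j < m) (if (r <= j)%N then 'X - x%:P else 1).
set M2 := \matrix_(i, j) if (r <= j)%N then (i == j)%:R
                         else char_poly_mx (K + x%:M) i j.
have eC : char_poly_mx (K + x%:M) = M2 *m diag_mx d.
  apply/matrixP => i j; rewrite mul_mx_diag !mxE.
  case: ifP => rj; last by rewrite mulr1.
  move: (K0 i j rj); rewrite [K i j]mxE => ->; rewrite add0r; case: (i == j); rewrite /= ?mul1r ?mul0r //.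
  by rewrite mulr0n polyC0 subr0.
rewrite /char_poly eC det_mulmx det_diag.
have -> : \prod_(j < m) d 0 j = ('X - x%:P) ^+ (m - r).
  rewrite (eq_bigr (fun j : 'I_m => if (r <= j)%N then 'X - x%:P else 1));
    last by move=> j _; rewrite mxE.
  rewrite -big_mkcond /= (eq_bigl (fun j : 'I_m => xpredT (j : nat) && (r <= j)%N)) // -(big_geq_mkord r m xpredT (fun _ => 'X - x%:P)).
  by rewrite prodr_const_nat.
exact: dvdp_mull (dvdpp _).
Qed.

Lemma sig_eqE n b (s t : 'I_(\sum_(j < n) b)) :
  (s == t) = (tagnat.sig1 s == tagnat.sig1 t) &&
             (tagnat.sig2 s == tagnat.sig2 t :> nat).
Proof.
apply/eqP/andP => [->|[/eqP e1 /eqP e2]]; first by split.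
apply: tagnat.sig_inj; rewrite !tagnat.sigE12.
move: (tagnat.sig2 s) (tagnat.sig2 t) e2; rewrite e1 => u v /val_inj -> //.
Qed.

Lemma star_rank (R : fieldType) a b n (M : 'M[R]_(a, b)) :
  (\rank (star_mx n M + 1%:M)%R <= a + b)%N.
Proof.
pose X : 'M[R]_(a + \sum_(j < n) b, a + b) :=
  block_mx 1%:M 0 0 (\mxcol_(i < n) (1%:M : 'M[R]_b)).
pose Y : 'M[R]_(a + b, a + \sum_(j < n) b) :=
  block_mx 1%:M (\mxrow_(j < n) M) M^T (\mxrow_(j < n) (1%:M : 'M[R]_b)).
have -> : (star_mx n M + 1%:M)%R = X *m Y.
  rewrite /X /Y mulmx_block /star_mx scalar_mx_block add_block_mx.
  rewrite !mul0mx !mul1mx !addr0 !add0r mxcol_mul mul_mxcol_mxrow.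
  under [in RHS]eq_mxcol do rewrite mul1mx.
  under [in RHS]eq_mxblock do rewrite mul1mx.
  congr block_mx.
  apply/matrixP => s t; rewrite !mxE sig_eqE.
  case: eqP => e1 /=; rewrite !mxE.
    by rewrite add0r.
  by rewrite addr0.
by apply: leq_trans (mxrankM_maxl _ _) (rank_leq_col _).
Qed.

Lemma star_mult (R : fieldType) a b n (M : 'M[R]_(a, b)) :
  ((n - 1) * b <= mup (-1) (char_poly (star_mx n M)))%N.
Proof.
apply: leq_trans (rank_mup _ (-1)).
have -> : ((-1)%:M : 'M[R]_(a + \sum_(j < n) b)) = - 1%:M.
  by apply/matrixP => i j; rewrite !mxE mulNrn.
rewrite opprK.
have := star_rank n M.
move: (\rank _) => r.
rewrite sum_nat_const card_ord => hr.
nia.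
Qed.

Theorem lemma3p10 (R : realFieldType) (p q n : nat) (B : 'M[R]_(p, q)) :
  (0 < q)%N -> (q <= p)%N -> (0 < n)%N ->
  ((n - 1) * q <= eig_mult (matC n B) (-1))%N /\
  ((n - 1) * p <= eig_mult (matD n B) (-1))%N.
Proof.
move=> _ _ _; split; exact: star_mult.
Qed.
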